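(* Algorithm B (defined in the context) has migration factor at most $\frac34$, and on every input whose optimal offline makespan is $1$ it produces a schedule with makespan at most $1.25$. Hence for every $M\ge\frac34$ there is a semi-online algorithm with migration factor $M$ and competitive ratio at most $\frac54$.
   Context: Model (two hierarchical machines with migration, bin stretching). Jobs $1,2,\dots,n$ arrive one by one ($n$ unknown in advance). Job $j$ has a size $p_j>0$ and a grade of service (GoS) $g_j\in\{1,2\}$; a job of GoS $1$ may only be processed on machine $m_1$, a job of GoS $2$ may be processed on $m_1$ or on $m_2$. The load of a machine is the total size of the jobs assigned to it, and the makespan is the maximum load. When job $j$ arrives, the algorithm must assign it to a machine, and at the same time it may reassign (migrate) previously arrived jobs to other machines (respecting the GoS constraints), provided that the total size of the migrated jobs is at most $M\cdot p_j$; $M\ge 0$ is the migration factor. Bin stretching: the optimal offline makespan of the complete input is known in advance and scaled to $1$. The competitive ratio is the supremum over inputs of (algorithm's makespan)/(optimal makespan). Notation: $Y_{j}$ is the set of jobs on $m_2$ just after job $j$ has been handled (including migrations), $y_j$ its total size, $y_0=0$. $p^{\max Y}_j$ and $p^{\max Y,2}_j$ are the largest and second largest sizes of jobs in $Y_{j-1}$ (each defined as $0$ if it does not exist), and $j^{\max Y}$ is a job of $Y_{j-1}$ of size $p^{\max Y}_j$. ''Sorted $Y_{j-1}$'' means the jobs of $Y_{j-1}$ listed in non-increasing order of size; $w_j$ denotes the total size of the set $W$ chosen when handling $j$. Algorithm B. On arrival of job $j$: Step 2: if $g_j=1$ or $y_{j-1}\ge 0.75$, assign $j$ to $m_1$.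 Step 3: else if $y_{j-1}+p_j\le 1.25$, assign $j$ to $m_2$. Step 4: else if $p_j\ge 0.75$: let $W$ be the longest prefix of sorted $Y_{j-1}$ with total size at most $0.75p_j$ (possibly empty). If $y_{j-1}-w_j+p_j>1.25$, assign $j$ to $m_1$ (no migration); otherwise migrate the jobs of $W$ to $m_1$ and assign $j$ to $m_2$. Step 5: else (so $p_j<0.75$): if $p_j+p^{\max Y}_j>1.25$, assign $j$ to $m_1$. Otherwise choose $W$ as follows: if $p^{\max Y}_j\ge y_{j-1}/2$, let $W=Y_{j-1}\setminus\{j^{\max Y}\}$; if $0.25\le p^{\max Y}_j<y_{j-1}/2$, let $W=\{j^{\max Y}\}$; if $p^{\max Y}_j<0.25$, let $W$ be the shortest prefix of sorted $Y_{j-1}$ with total size at least $0.25$ (or all of $Y_{j-1}$ if none exists), and if then $w_j>0.75p_j$ replace $W$ by $Y_{j-1}\setminus W$. Migrate the jobs of $W$ to $m_1$ and assign $j$ to $m_2$. *)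

(* Defs.v *)
From HB Require Import structures.
From mathcomp Require Import all_boot all_order all_algebra.
Set Implicit Arguments. Unset Strict Implicit. Unset Printing Implicit Defensive.
Import Order.TTheory GRing.Theory Num.Theory.
Local Open Scope ring_scope.

(* Grade of service: G1 = may only run on m1; G2 = may run on m1 or m2. *)
Inductive gos := G1 | G2.

Section Defs.
Variable R : realFieldType.

(* A job is (size, GoS).  An input is the sequence of jobs in arrival order;
   jobs are indexed 0, 1, ..., size inp - 1 (job j+1 of the paper is index j). *)
Definition job := (R * gos)%type.

Variable inp : seq job.

Definition psz (i : nat) : R := (nth (0, G1) inp i).1.
Definition pg (i : nat) : gos := (nth (0, G1) inp i).2.
Definition is_g2 (i : nat) : bool := if pg i is G2 then true else false.

Definition positive_input : Prop :=
  forall i, (i < size inp)%N -> 0 < psz i.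

(* An assignment A : nat -> bool says job i is on m2 iff A i. *)
Definition feasible (n : nat) (A : nat -> bool) : Prop :=
  forall i, (i < n)%N -> A i -> is_g2 i.

Definition load1 (n : nat) (A : nat -> bool) : R :=
  \sum_(i <- iota 0 n | ~~ A i) psz i.
Definition load2 (n : nat) (A : nat -> bool) : R :=
  \sum_(i <- iota 0 n | A i) psz i.
Definition makespan (n : nat) (A : nat -> bool) : R :=
  Num.max (load1 n A) (load2 n A).

Definition opt_is (n : nat) (T : R) : Prop :=
  (exists A, feasible n A /\ makespan n A = T) /\
  (forall A, feasible n A -> T <= makespan n A).

Definition migration (j : nat) (A A' : nat -> bool) : R :=
  \sum_(i <- iota 0 j | A i != A' i) psz i.

(* Y : seq nat is the set of (indices of) jobs on m2. *)
Definition load (Y : seq nat) : R := \sum_(i <- Y) psz i.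
Definition pmaxY (Y : seq nat) : R := \big[Num.max/0]_(i <- Y) psz i.

Definition sorted_of (s Y : seq nat) : bool :=
  perm_eq s Y && sorted (fun a b => psz b <= psz a) s.

Definition longest_prefix_le (s : seq nat) (b : R) (W : seq nat) : Prop :=
  exists k, [/\ (k <= size s)%N, W = take k s, load (take k s) <= b &
    forall k', (k < k')%N -> (k' <= size s)%N -> b < load (take k' s)].

Definition shortest_prefix_ge (s : seq nat) (b : R) (W : seq nat) : Prop :=
  (exists k, [/\ (k <= size s)%N, W = take k s, b <= load (take k s) &
     forall k', (k' < k)%N -> load (take k' s) < b])
  \/ ((forall k, (k <= size s)%N -> load (take k s) < b) /\ W = s).

Definition remW (Y W : seq nat) : seq nat := [seq i <- Y | i \notin W].

(* Choice of W in Step 5 (p = size of the arriving job). *)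
Definition step5_W (p : R) (Y W : seq nat) : Prop :=
  let y := load Y in
  let pm := pmaxY Y in
  if y / 2 <= pm then
    exists jm, [/\ jm \in Y, psz jm = pm & W = [seq i <- Y | i != jm]]
  else if 1/4 <= pm then
    exists jm, [/\ jm \in Y, psz jm = pm & W = [:: jm]]
  else
    exists s W0, [/\ sorted_of s Y, shortest_prefix_ge s (1/4) W0 &
      W = if 3/4 * p < load W0 then remW Y W0 else W0].

(* One step of Algorithm B: handling job j turns Y (= Y_{j-1} of the paper)
   into Y' (= Y_j).  Ties (order of equal sizes, choice of j^{maxY}) may be
   broken arbitrarily, hence a relation. *)
Definition B_step (j : nat) (Y Y' : seq nat) : Prop :=
  let p := psz j in
  let y := load Y in
  if ~~ is_g2 j || (3/4 <= y) then Y' = Y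
  else if y + p <= 5/4 then Y' = j :: Y
  else if 3/4 <= p then
    exists s W, [/\ sorted_of s Y, longest_prefix_le s (3/4 * p) W &
      (if 5/4 < y - load W + p then Y' = Y else Y' = j :: remW Y W)]
  else if 5/4 < p + pmaxY Y then Y' = Y
  else exists W, step5_W p Y W /\ Y' = j :: remW Y W.

(* A run of Algorithm B on the first n jobs: Ys j is the content of m2
   after the first j jobs have been handled. *)
Definition B_run (n : nat) (Ys : nat -> seq nat) : Prop :=
  Ys 0%N = [::] /\ forall j, (j < n)%N -> B_step j (Ys j) (Ys j.+1).

End Defs.

(* A (deterministic) online algorithm maps the prefix of jobs seen so far to
   the current assignment of those jobs (true = m2).  Being a function of the
   prefix only, it cannot depend on future jobs or on n. *)
Definition online_alg (R : realFieldType) := seq (job R) -> nat -> bool.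

(* alg is a bin-stretching semi-online algorithm (optimal makespan known and
   scaled to 1) with migration factor M and competitive ratio at most c. *)
Definition semi_online_ok (R : realFieldType) (M c : R) (alg : online_alg R)
  : Prop :=
  forall inp : seq (job R),
    positive_input inp -> opt_is inp (size inp) 1 ->
    (forall j, (j < size inp)%N ->
       feasible inp j.+1 (alg (take j.+1 inp)) /\
       migration inp j (alg (take j inp)) (alg (take j.+1 inp))
         <= M * psz inp j) /\
    makespan inp (size inp) (alg inp) <= c.

(* Main.v *)
Require Import Defs.
From HB Require Import structures.
From mathcomp Require Import all_boot all_order all_algebra.
From mathcomp Require Import lra.
Import Order.TTheory GRing.Theory Num.Theory.
Set Implicit Arguments. Unset Strict Implicit. Unset Printing Implicit Defensive.
Local Open Scope ring_scope.


Section Gen.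
Variable R : realFieldType.
Variable inp : seq (job R).
Local Notation p := (psz inp).
Local Notation n := (size inp).
Hypothesis pos : positive_input inp.

Lemma p_ge0 i : (i < n)%N -> 0 <= p i.
Proof. by move=> h; apply/ltW/pos. Qed.

Lemma sum_iota_mem m (S : seq nat) : uniq S -> (forall i, i \in S -> (i < m)%N) ->
  \sum_(i <- iota 0 m | i \in S) p i = load inp S.
Proof.
move=> uS hS; rewrite -big_filter; apply: perm_big; apply: uniq_perm.
- by rewrite filter_uniq // iota_uniq.
- by [].
move=> i; rewrite mem_filter mem_iota /= add0n.
by case iS: (i \in S) => //=; rewrite hS.
Qed.

Lemma load_filterC (P : pred nat) Y :
  load inp [seq i <- Y | P i] + load inp [seq i <- Y | ~~ P i] = load inp Y.
Proof. by rewrite /load !big_filter [in RHS](bigID P). Qed.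

Lemma load_cat s1 s2 : load inp (s1 ++ s2) = load inp s1 + load inp s2.
Proof. by rewrite /load big_cat. Qed.

Lemma load_ge0 Y : (forall i, i \in Y -> 0 <= p i) -> 0 <= load inp Y.
Proof. by move=> h; rewrite /load big_seq; apply: sumr_ge0 => i /h. Qed.

Lemma load_perm s1 s2 : perm_eq s1 s2 -> load inp s1 = load inp s2.
Proof. by move=> h; apply: perm_big. Qed.

Lemma load_sub_filter Y W : uniq Y -> uniq W -> {subset W <= Y} ->
  load inp [seq i <- Y | i \in W] = load inp W.
Proof.
move=> uY uW sW; apply: load_perm; apply: uniq_perm => //.
- by rewrite filter_uniq.
move=> i; rewrite mem_filter; case iW: (i \in W) => //=; exact: sW.
Qed.

Lemma load_take_mono s k k' : (forall i, i \in s -> 0 <= p i) -> (k <= k')%N ->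
  load inp (take k s) <= load inp (take k' s).
Proof.
move=> h kk; rewrite -(subnKC kk) takeD load_cat lerDl; apply: load_ge0 => i hi.
by apply: h; move: hi => /mem_take /mem_drop.
Qed.

Lemma load_take_nth s k : (k < size s)%N ->
  load inp (take k.+1 s) = load inp (take k s) + p (nth 0%N s k).
Proof. by move=> h; rewrite (take_nth 0%N h) -cats1 load_cat /load big_seq1. Qed.

Lemma pmax_ge Y i : i \in Y -> p i <= pmaxY inp Y.
Proof.
elim: Y => // a Y IH; rewrite inE /pmaxY big_cons => /orP [/eqP -> | h].
  by rewrite le_max lexx.
by rewrite le_max IH ?orbT.
Qed.

Lemma pmax_le Y c : 0 <= c -> (forall i, i \in Y -> p i <= c) -> pmaxY inp Y <= c.
Proof.
move=> c0; elim: Y => [|a Y IH] h; first by rewrite /pmaxY big_nil.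
rewrite /pmaxY big_cons ge_max h ?inE ?eqxx //=; apply: IH => i hi.
by apply: h; rewrite inE hi orbT.
Qed.

Lemma pmax_att Y : pmaxY inp Y = 0 \/ exists2 i, i \in Y & p i = pmaxY inp Y.
Proof.
elim: Y => [|a Y IH]; first by left; rewrite /pmaxY big_nil.
rewrite /pmaxY big_cons; move: IH; rewrite /pmaxY.
set m := \big[_/_]_(i <- Y) _ => IH.
case: (leP (p a) m) => h.
- case: IH => [->|[i iY ei]]; first by left.
  by right; exists i => //; rewrite inE iY orbT.
- right; exists a => //; by rewrite inE eqxx.
Qed.

Lemma load12 m (A : nat -> bool) : load1 inp m A + load2 inp m A = \sum_(i <- iota 0 m) p i.
Proof. by rewrite /load1 /load2 addrC [in RHS](bigID A). Qed.

End Gen.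



Section Det.
Variable R : realFieldType.

Definition loadf (f : nat -> R) (Y : seq nat) : R := \sum_(i <- Y) f i.
Definition pmaxf (f : nat -> R) (Y : seq nat) : R := \big[Num.max/0]_(i <- Y) f i.
Definition sortf (f : nat -> R) (Y : seq nat) := sort (fun a b => f b <= f a) Y.
Definition lpk (f : nat -> R) (s : seq nat) (b : R) : nat :=
  find (fun k => b < loadf f (take k.+1 s)) (iota 0 (size s)).
Definition spk (f : nat -> R) (s : seq nat) (b : R) : nat :=
  find (fun k => b <= loadf f (take k s)) (iota 0 (size s).+1).

Definition stepD (f : nat -> R) (g : nat -> bool) (j : nat) (Y : seq nat) : seq nat :=
  let p := f j in let y := loadf f Y in let pm := pmaxf f Y in
  let s := sortf f Y in
  if ~~ g j || (3/4 <= y) then Y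
  else if y + p <= 5/4 then j :: Y
  else if 3/4 <= p then
    let W := take (lpk f s (3/4 * p)) s in
    if 5/4 < y - loadf f W + p then Y else j :: [seq i <- Y | i \notin W]
  else if 5/4 < p + pm then Y
  else
    let jm := head 0%N s in
    let W := if y / 2 <= pm then [seq i <- Y | i != jm]
             else if 1/4 <= pm then [:: jm]
             else let W0 := take (spk f s (1/4)) s in
                  if 3/4 * p < loadf f W0 then [seq i <- Y | i \notin W0] else W0 in
    j :: [seq i <- Y | i \notin W].

Lemma sortf_congr f f' Y : {in Y, f =1 f'} -> sortf f Y = sortf f' Y.
Proof.
move=> h.
have E : forall h : nat -> R, sortf h Y =
   map fst (sort (fun a b : nat * R => b.2 <= a.2) (map (fun i => (i, h i)) Y)).
  by move=> h'; rewrite sort_map -map_comp map_id.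
rewrite !E; congr (map _ (sort _ _)); apply/eq_in_map => i iY /=; by rewrite h.
Qed.

Lemma stepD_congr f f' g g' j Y : {in j :: Y, f =1 f'} -> g j = g' j ->
  stepD f g j Y = stepD f' g' j Y.
Proof.
move=> hf hg.
have hY : {in Y, f =1 f'} by move=> i iY; apply: hf; rewrite inE iY orbT.
have hj : f j = f' j by apply: hf; rewrite inE eqxx.
have eL : forall Z, {subset Z <= Y} -> loadf f Z = loadf f' Z.
  by move=> Z sZ; apply: eq_big_seq => i /sZ /hY.
have eS := @sortf_congr f f' Y hY.
have eT : forall k, loadf f (take k (sortf f' Y)) = loadf f' (take k (sortf f' Y)).
  by move=> k; apply: eL => i /mem_take; rewrite mem_sort.
have eM : pmaxf f Y = pmaxf f' Y by apply: eq_big_seq.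
rewrite /stepD /= hg hj (eL Y) // eM eS.
have eLp : forall b, lpk f (sortf f' Y) b = lpk f' (sortf f' Y) b.
  by move=> b; rewrite /lpk; apply: eq_find => k; rewrite eT.
have eSp : forall b, spk f (sortf f' Y) b = spk f' (sortf f' Y) b.
  by move=> b; rewrite /spk; apply: eq_find => k; rewrite eT.
by rewrite !eLp !eSp !eT.
Qed.

End Det.



Section Spec.
Variable R : realFieldType.
Variable inp : seq (job R).
Local Notation p := (psz inp).

Lemma loadfE : loadf p = load inp. Proof. by []. Qed.
Lemma pmaxfE : pmaxf p = pmaxY inp. Proof. by []. Qed.

Lemma rtrans : transitive (fun a b => p b <= p a).
Proof. by move=> x y z h1 h2; exact: le_trans h2 h1. Qed.

Lemma sorted_of_sortf Y : sorted_of inp (sortf p Y) Y.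
Proof.
apply/andP; split; first by rewrite perm_sort perm_refl.
by apply: sort_sorted => a b; rewrite le_total.
Qed.

Lemma lpk_spec s b : 0 <= b -> (forall i, i \in s -> 0 <= p i) ->
  longest_prefix_le inp s b (take (lpk p s b) s).
Proof.
move=> b0 hs; set k := lpk p s b.
have ks : (k <= size s)%N by rewrite /k /lpk -{2}(size_iota 0 (size s)) find_size.
exists k; split => //.
- case kE: k => [|k0]; first by rewrite take0 /load big_nil.
  have : (k0 < k)%N by rewrite kE.
  move/(before_find 0%N); rewrite nth_iota ?add0n; last by rewrite -ltnS -kE.
  by rewrite -loadfE => /negbT; rewrite -leNgt.
- move=> k' kk' k's.
  have kl : (k < size s)%N by apply: leq_trans kk' k's.
  have : has (fun k => b < loadf p (take k.+1 s)) (iota 0 (size s)).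
    by rewrite has_find size_iota.
  move/(nth_find 0%N); rewrite -/(lpk p s b) -/k nth_iota // add0n => h.
  apply: lt_le_trans h _; apply: load_take_mono => //.
Qed.

Lemma spk_spec s b : 0 < b -> shortest_prefix_ge inp s b (take (spk p s b) s).
Proof.
move=> b0; set k := spk p s b.
case hk: (has (fun k => b <= loadf p (take k s)) (iota 0 (size s).+1)).
- left; exists k.
  have kl : (k < (size s).+1)%N by rewrite /k /spk -{2}(size_iota 0 (size s).+1) -has_find.
  split => //.
    by move: hk => /(nth_find 0%N); rewrite -/(spk p s b) -/k nth_iota // add0n.
  move=> k' kk'; move: (before_find 0%N kk'); rewrite nth_iota ?add0n; last first.
    by apply: ltn_trans kk' kl.
  by move/negbT; rewrite -ltNge.
- right; split.
  + move=> k' k's; move/hasPn: (negbT hk) => /(_ k'); rewrite mem_iota add0n ltnS k's.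
    by move=> /(_ isT); rewrite -ltNge.
  + rewrite take_oversize // /k /spk.
    move: hk; rewrite has_find size_iota => /negbT; rewrite -leqNgt.
    exact: ltnW.
Qed.

Lemma head_sortf Y : Y != [::] -> (forall i, i \in Y -> 0 <= p i) ->
  head 0%N (sortf p Y) \in Y /\ p (head 0%N (sortf p Y)) = pmaxY inp Y.
Proof.
move=> Yn hY.
have : sortf p Y != [::].
  by rewrite -size_eq0 size_sort size_eq0.
have so := sort_sorted (fun a b => le_total (p b) (p a)) Y.
rewrite -/(sortf p Y) in so *.
have mS : forall i, i \in sortf p Y = (i \in Y) by move=> i; rewrite mem_sort.
case E: (sortf p Y) => [|h t] // _.
rewrite E in so mS => /=.
have hY' : h \in Y by rewrite -mS inE eqxx.
split => //; apply/eqP; rewrite eq_le; apply/andP; split; first exact: pmax_ge.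
apply: pmax_le; first exact: hY.
move=> i; rewrite -mS inE => /orP [/eqP -> //|it].
by move: (order_path_min rtrans so) => /allP /(_ i it).
Qed.

Lemma stepD_spec j Y : (forall i, i \in Y -> 0 < p i) -> 0 < p j ->
  B_step inp j Y (stepD p (is_g2 inp) j Y).
Proof.
move=> hY hj; have hY0 : forall i, i \in Y -> 0 <= p i by move=> i /hY /ltW.
rewrite /B_step /stepD /= !loadfE pmaxfE.
case: ifP => c2; rewrite c2 //.
case: ifP => c3; rewrite c3 //.
case: ifP => c4; rewrite c4.
  exists (sortf p Y), (take (lpk p (sortf p Y) (3/4 * p j)) (sortf p Y)); split.
  - exact: sorted_of_sortf.
  - apply: lpk_spec; first by lra.
    by move=> i; rewrite mem_sort; apply: hY0.
  - by case: ifP => c; rewrite c.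
case: ifP => c5; rewrite c5 //.
eexists; split; last reflexivity.
rewrite /step5_W /=.
have Yn : Y != [::].
  apply/eqP => Y0; move: c3 c5; rewrite Y0 /pmaxY /load !big_nil.
  move/negbT; rewrite -ltNge => h1; move/negbT; rewrite -leNgt => h2; lra.
have [hm1 hm2] := head_sortf Yn hY0.
case: ifP => c6; rewrite ?c6.
  by exists (head 0%N (sortf p Y)); split.
case: ifP => c7; rewrite ?c7.
  by exists (head 0%N (sortf p Y)); split.
exists (sortf p Y), (take (spk p (sortf p Y) (1 / 4)) (sortf p Y)); split => //.
  exact: sorted_of_sortf.
by apply: spk_spec; lra.
Qed.
End Spec.



Section Class.
Variable R : realFieldType.
Variable inp : seq (job R).
Local Notation p := (psz inp).

Definition rej4 j (Y : seq nat) := 3/4 <= p j /\ (5/4 < p j \/ exists T : seq nat,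
  [/\ uniq T, {subset T <= Y}, 3/4 * p j < load inp T & forall t, t \in T -> 1 < p t + p j]).
Definition rej5 j (Y : seq nat) := p j < 3/4 /\ exists2 jm, jm \in Y & 5/4 < p j + p jm.

Lemma load_remW Y W : uniq Y -> uniq W -> {subset W <= Y} ->
  load inp (remW Y W) = load inp Y - load inp W.
Proof.
move=> uY uW sW; rewrite -(load_filterC inp (fun i => i \in W) Y).
by rewrite load_sub_filter // addrC addKr.
Qed.

Lemma load_cons j Y : load inp (j :: Y) = p j + load inp Y.
Proof. by rewrite /load big_cons. Qed.

Lemma step_class j Y Y' :
  uniq Y -> (forall i, i \in Y -> 0 < p i) -> 0 < p j ->
  B_step inp j Y Y' ->
  [\/ Y' = Y /\ (~~ is_g2 inp j \/ 3/4 <= load inp Y),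
      [/\ is_g2 inp j, Y' = j :: Y & load inp Y + p j <= 5/4],
      exists W : seq nat, [/\ is_g2 inp j /\ load inp Y < 3/4, Y' = j :: remW Y W,
             uniq W /\ {subset W <= Y}, load inp W <= 3/4 * p j & 3/4 <= load inp Y' <= 5/4] |
      [/\ Y' = Y, is_g2 inp j, load inp Y < 3/4, 5/4 < load inp Y + p j & rej4 j Y \/ rej5 j Y]].
Proof.
move=> uY hY hj; rewrite /B_step /=.
have hY0 : forall i, i \in Y -> 0 <= p i by move=> i /hY /ltW.
case: ifP => c2.
  by move=> ->; apply: Or41; split => //; case/orP: c2; [left|right].
move/negbT: c2; rewrite negb_or negbK => /andP [g2]; rewrite -ltNge => yl.
case: ifP => c3; first by move=> ->; apply: Or42.
move/negbT: c3; rewrite -ltNge => c3.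
have acc : forall W, uniq W -> {subset W <= Y} -> load inp W <= 3/4 * p j ->
    3/4 <= p j + (load inp Y - load inp W) <= 5/4 ->
    exists W0 : seq nat, [/\ is_g2 inp j /\ load inp Y < 3/4, j :: remW Y W = j :: remW Y W0,
             uniq W0 /\ {subset W0 <= Y}, load inp W0 <= 3/4 * p j &
             3/4 <= load inp (j :: remW Y W) <= 5/4].
  by move=> W uW sW lW bW; exists W; split => //; rewrite load_cons load_remW.
case: ifP => c4.
  case=> s [W [/andP [ps ss] [k [ks WE lk hk]] hb]].
  have us : uniq s by rewrite (perm_uniq ps).
  have ms : forall i, (i \in s) = (i \in Y) by move=> i; rewrite (perm_mem ps).
  have ys : load inp s = load inp Y by apply: load_perm.
  have uW : uniq W by rewrite WE take_uniq.
  have sW : {subset W <= Y} by move=> i; rewrite WE -ms => /mem_take.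
  move: hb; case: ifP => c.
    move=> ->; apply: Or44; split => //; left; split => //.
    case: (ltnP k (size s)) => kl; last first.
      by left; move: c; rewrite WE take_oversize // ys; lra.
    right; exists (take k.+1 s); split.
    - by rewrite take_uniq.
    - by move=> i /mem_take; rewrite ms.
    - exact: hk.
    move=> t tT.
    have hn : p (nth 0%N s k) <= p t.
      have it : (index t (take k.+1 s) < k.+1)%N.
        have := index_mem t (take k.+1 s); rewrite tT size_take_min => h.
        by apply: leq_trans h _; exact: geq_minl.
      rewrite -(nth_index 0%N tT) nth_take //.
      apply: (sorted_leq_nth (@rtrans _ inp) (fun x => lexx _) 0%N ss).
      - by rewrite inE (leq_ltn_trans _ kl) // -ltnS.
      - by rewrite inE.
      - by rewrite -ltnS.
    have := hk k.+1 (ltnSn k) kl; rewrite load_take_nth // -WE => h.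
    lra.
  move=> ->; apply: Or43; apply: acc => //; first by rewrite WE.
  move/negbT: c; rewrite -leNgt => c.
  have : 0 <= load inp (remW Y W) by apply: load_ge0 => i; rewrite mem_filter => /andP [_ /hY0].
  rewrite load_remW //; lra.
move/negbT: c4; rewrite -ltNge => c4.
case: ifP => c5.
  move=> ->; apply: Or44; split => //; right; split => //.
  case: (pmax_att inp Y) => [e|[jm jmY e]]; first by move: c5; rewrite e; lra.
  by exists jm => //; rewrite e.
move/negbT: c5; rewrite -leNgt => c5.
case=> W [hW ->]; apply: Or43.
suff [uW sW lW bW] : [/\ uniq W, {subset W <= Y}, load inp W <= 3/4 * p j &
    3/4 <= p j + (load inp Y - load inp W) <= 5/4] by apply: acc.
have pmY : forall i, i \in Y -> p i <= pmaxY inp Y by move=> i; apply: pmax_ge.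
move: hW; rewrite /step5_W /=.
case: ifP => c6.
  case=> jm [jmY pjm WE].
  have eW : load inp W = load inp Y - p jm.
    rewrite -(load_filterC inp (fun i => i != jm) Y) WE.
    have -> : [seq i <- Y | ~~ (i != jm)] = [seq i <- Y | i \in [:: jm]].
      by apply: eq_filter => i; rewrite negbK inE.
    rewrite load_sub_filter //; last by move=> i; rewrite inE => /eqP ->.
    have -> : load inp [:: jm] = p jm by rewrite /load big_seq1.
    by rewrite addrK.
  split.
  - by rewrite WE filter_uniq.
  - by move=> i; rewrite WE mem_filter => /andP [].
  - by rewrite eW; lra.
  - by rewrite eW; lra.
case: ifP => c7.
  case=> jm [jmY pjm WE].
  have eW : load inp W = p jm by rewrite WE /load big_seq1.
  split.
  - by rewrite WE.
  - by move=> i; rewrite WE inE => /eqP ->.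
  - by rewrite eW; lra.
  - by rewrite eW; lra.
move/negbT: c6; rewrite -ltNge => c6.
move/negbT: c7; rewrite -ltNge => c7.
case=> s [W0 [/andP [ps ss] sp WE]].
have us : uniq s by rewrite (perm_uniq ps).
have ms : forall i, (i \in s) = (i \in Y) by move=> i; rewrite (perm_mem ps).
have ys : load inp s = load inp Y by apply: load_perm.
have [uW0 sW0 l1 l2] : [/\ uniq W0, {subset W0 <= Y}, 1/4 <= load inp W0 &
      load inp W0 < 1/4 + pmaxY inp Y].
  case: sp => [[k [ks W0E lk hk]] | [hall W0E]]; last first.
    by move: (hall (size s) (leqnn _)); rewrite take_size ys; lra.
  have uW0 : uniq W0 by rewrite W0E take_uniq.
  have sW0 : {subset W0 <= Y} by move=> i; rewrite W0E -ms => /mem_take.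
  split => //; first by rewrite W0E.
  case: k ks W0E lk hk => [|k] ks W0E lk hk.
    by move: lk; rewrite take0 /load big_nil; lra.
  rewrite W0E load_take_nth //.
  have h1 := hk k (ltnSn k).
  have h2 : p (nth 0%N s k) <= pmaxY inp Y by apply: pmY; rewrite -ms mem_nth.
  lra.
move: WE; case: ifP => c8 WE.
  have eW : load inp W = load inp Y - load inp W0 by rewrite WE load_remW.
  split.
  - by rewrite WE filter_uniq.
  - by move=> i; rewrite WE mem_filter => /andP [].
  - by rewrite eW; lra.
  - by rewrite eW; lra.
move/negbT: c8; rewrite -leNgt => c8.
rewrite WE; split => //; lra.
Qed.

End Class.



Section Run.
Variable R : realFieldType.
Variable inp : seq (job R).
Local Notation p := (psz inp).
Local Notation n := (size inp).
Hypothesis pos : positive_input inp.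
Variable Ys : nat -> seq nat.
Hypothesis run : B_run inp n Ys.

Lemma run_inv j : (j <= n)%N ->
  [/\ uniq (Ys j), forall i, i \in Ys j -> (i < j)%N && is_g2 inp i & load inp (Ys j) <= 5/4].
Proof.
case: run => Y0 hst.
elim: j => [|j IH] hj.
  by rewrite Y0; split => //; rewrite /load big_nil; lra.
have jn : (j < n)%N by [].
have [uY mY lY] := IH (ltnW hj).
have hY : forall i, i \in Ys j -> 0 < p i.
  by move=> i /mY /andP [ij _]; apply: pos; apply: ltn_trans ij jn.
have jY : j \notin Ys j by apply/negP => /mY; rewrite ltnn.
case: (step_class uY hY (pos jn) (hst j jn)).
- case=> -> _; split => // i /mY /andP [ij ->]; by rewrite andbT ltnW.
- case=> g2 -> l; split.
  + by rewrite /= jY.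
  + move=> i; rewrite inE => /orP [/eqP ->|/mY /andP [ij ->]]; first by rewrite ltnSn.
    by rewrite andbT ltnW.
  + by rewrite load_cons; lra.
- case=> W [[g2 _] -> [uW sW] _ /andP [_ l]]; split => //.
  + rewrite /= filter_uniq // andbT mem_filter negb_and jY orbT //.
  + move=> i; rewrite inE => /orP [/eqP ->|]; first by rewrite ltnSn.
    by rewrite mem_filter => /andP [_ /mY /andP [ij ->]]; rewrite andbT ltnW.
- case=> -> _ _ _ _; split => // i /mY /andP [ij ->]; by rewrite andbT ltnW.
Qed.

Lemma run_step j : (j < n)%N -> 
  [\/ Ys j.+1 = Ys j /\ (~~ is_g2 inp j \/ 3/4 <= load inp (Ys j)),
      [/\ is_g2 inp j, Ys j.+1 = j :: Ys j & load inp (Ys j) + p j <= 5/4],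
      exists W : seq nat, [/\ is_g2 inp j /\ load inp (Ys j) < 3/4, Ys j.+1 = j :: remW (Ys j) W,
             uniq W /\ {subset W <= Ys j}, load inp W <= 3/4 * p j & 3/4 <= load inp (Ys j.+1) <= 5/4] |
      [/\ Ys j.+1 = Ys j, is_g2 inp j, load inp (Ys j) < 3/4, 5/4 < load inp (Ys j) + p j &
          rej4 inp j (Ys j) \/ rej5 inp j (Ys j)]].
Proof.
move=> jn; case: run => Y0 hst.
have [uY mY lY] := run_inv (ltnW jn).
have hY : forall i, i \in Ys j -> 0 < p i.
  by move=> i /mY /andP [ij _]; apply: pos; apply: ltn_trans ij jn.
exact: (step_class uY hY (pos jn) (hst j jn)).
Qed.

Lemma run_mono j : (j < n)%N -> load inp (Ys j) <= load inp (Ys j.+1).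
Proof.
move=> jn; have pj := pos jn.
case: (run_step jn).
- by case=> ->.
- by case=> _ -> _; rewrite load_cons; lra.
- by case=> W [[_ l] _ _ _ /andP [l2 _]]; lra.
- by case=> ->.
Qed.

Lemma run_mig j : (j < n)%N ->
  migration inp j (fun i => i \in Ys j) (fun i => i \in Ys j.+1) <= 3/4 * p j.
Proof.
move=> jn; have pj := pos jn.
have [uY mY lY] := run_inv (ltnW jn).
have z : forall Y' : seq nat, (forall i, (i < j)%N -> (i \in Ys j) = (i \in Y')) ->
    migration inp j (fun i => i \in Ys j) (fun i => i \in Y') <= 3/4 * p j.
  move=> Y' h; rewrite /migration big_seq_cond big_pred0; first by lra.
  by move=> i; rewrite mem_iota add0n /= => //; case ij: (i < j)%N; rewrite ?andbF //= h // eqxx.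
case: (run_step jn).
- by case=> -> _; apply: z.
- case=> _ -> _; apply: z => i ij; rewrite inE ltn_eqF //.
- case=> W [_ -> [uW sW] lW _].
  rewrite /migration big_seq_cond.
  rewrite (eq_bigl (fun i => (i \in iota 0 j) && (i \in W))); last first.
    move=> i /=; rewrite mem_iota add0n /=; case ij: (i < j)%N => //=.
    rewrite inE ltn_eqF //= mem_filter.
    case iW: (i \in W); last by rewrite /= eqxx.
    by rewrite (sW _ iW).
  rewrite -big_seq_cond sum_iota_mem //.
  by move=> i /sW /mY /andP [].
- by case=> -> _ _ _ _; apply: z.
Qed.

End Run.



Section Mk.
Variable R : realFieldType.
Variable inp : seq (job R).
Local Notation p := (psz inp).
Local Notation n := (size inp).
Hypothesis pos : positive_input inp.

Lemma machine_ge (A : nat -> bool) (b : bool) S : uniq S ->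
  (forall i, i \in S -> (i < n)%N /\ A i = b) ->
  load inp S <= \sum_(i <- iota 0 n | A i == b) p i.
Proof.
move=> uS hS; rewrite -(@sum_iota_mem _ inp n S uS); last by move=> i /hS [].
rewrite big_mkcond [X in _ <= X]big_mkcond /= big_seq [X in _ <= X]big_seq.
apply: ler_sum => i; rewrite mem_iota add0n /= => hi.
case iS: (i \in S); first by have [_ ->] := hS i iS; rewrite eqxx.
by case: (A i == b) => //; apply: p_ge0.
Qed.

Lemma mach_le1 (A : nat -> bool) b : load1 inp n A <= 1 -> load2 inp n A <= 1 ->
  \sum_(i <- iota 0 n | A i == b) p i <= 1.
Proof.
move=> h1 h2; case: b.
  by rewrite (eq_bigl A) // => i; rewrite eqb_id.
by rewrite (eq_bigl (fun i => ~~ A i)) // => i; rewrite eqbF_neg.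
Qed.

Lemma key1 (B A : nat -> bool) : (forall i, (i < n)%N -> ~~ B i -> ~~ A i) ->
  load1 inp n B <= load1 inp n A.
Proof.
move=> h; rewrite /load1 big_mkcond [X in _ <= X]big_mkcond /= big_seq [X in _ <= X]big_seq.
apply: ler_sum => i; rewrite mem_iota add0n /= => hi.
have p0 := p_ge0 pos hi.
case Bi: (B i); case Ai: (A i) => //=.
by move: (h i hi); rewrite Bi Ai => /(_ isT).
Qed.

Lemma key2 (B A : nat -> bool) r S : (r < n)%N -> uniq S ->
  (forall s, s \in S -> [/\ (s < n)%N, B s & ~~ A s]) ->
  (forall i, (i < n)%N -> ~~ B i -> ~~ A i \/ i = r) ->
  load1 inp n B + load inp S <= load1 inp n A + p r.
Proof.
move=> rn uS hS h.
have -> : p r = load inp [:: r] by rewrite /load big_seq1.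
rewrite -(@sum_iota_mem _ inp n S uS); last by move=> i /hS [].
rewrite -(@sum_iota_mem _ inp n [:: r]) //; last by move=> i; rewrite inE => /eqP ->.
rewrite /load1 big_mkcond [X in _ + X]big_mkcond [X in _ <= X + _]big_mkcond.
rewrite [X in _ <= _ + X]big_mkcond -!big_split /=.
rewrite big_seq [X in _ <= X]big_seq.
apply: ler_sum => i; rewrite mem_iota add0n /= => hi.
have p0 := p_ge0 pos hi.
case iS: (i \in S).
  have [_ -> nA] := hS i iS; rewrite (negbTE nA) /=; case: (i \in [:: r]); lra.
case Bi: (B i) => /=; first by case: (~~ A i); case: (i \in [:: r]); lra.
have := h i hi; rewrite Bi => /(_ isT) [nA|ir]; first by rewrite nA; case: (i \in [:: r]); lra.
by rewrite ir in p0 *; rewrite inE eqxx; case: (~~ A r); lra.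
Qed.

End Mk.



Section Make.
Variable R : realFieldType.
Variable inp : seq (job R).
Local Notation p := (psz inp).
Local Notation n := (size inp).
Hypothesis pos : positive_input inp.
Variable Ys : nat -> seq nat.
Hypothesis run : B_run inp n Ys.

Lemma run_makespan : opt_is inp n 1 -> makespan inp n (fun i => i \in Ys n) <= 5/4.
Proof.
case=> [[A [fA mA]] _].
have [l1A l2A] : load1 inp n A <= 1 /\ load2 inp n A <= 1.
  by move: mA; rewrite /makespan => e; split; rewrite -e le_max lexx ?orbT.
have [uN mN lN] := run_inv pos run (leqnn n).
have l2B : load2 inp n (fun i => i \in Ys n) = load inp (Ys n).
  by rewrite /load2 sum_iota_mem // => i /mN /andP [].
rewrite /makespan ge_max l2B lN andbT.
have tB := load12 inp n (fun i => i \in Ys n).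
have tA := load12 inp n A.
rewrite l2B in tB.
case: (leP (3/4) (load inp (Ys n))) => hy; first by lra.
have mono : forall j k, (j + k <= n)%N -> load inp (Ys j) <= load inp (Ys (j + k)).
  move=> j; elim=> [|k IH] h; first by rewrite addn0.
  rewrite addnS in h *; apply: le_trans (IH (ltnW h)) _; exact: run_mono.
have small : forall j, (j <= n)%N -> load inp (Ys j) < 3/4.
  move=> j jn; have := mono j (n - j)%N; rewrite subnKC // => /(_ (leqnn n)) h; lra.
have grow : forall j, (j < n)%N -> Ys j.+1 = Ys j \/ Ys j.+1 = j :: Ys j.
  move=> j jn; case: (run_step pos run jn).
  - by case=> ->; left.
  - by case=> _ ->; right.
  - case=> W [_ _ _ _ /andP [h _]]; exfalso; have := small j.+1 jn; lra.
  - by case=> ->; left.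
have sub : forall j k, (j + k <= n)%N -> {subset Ys j <= Ys (j + k)}.
  move=> j; elim=> [|k IH] h i; first by rewrite addn0.
  rewrite addnS in h *; move=> /(IH (ltnW h)) hi.
  by case: (grow (j + k)%N h) => ->; rewrite ?inE hi ?orbT.
have subn : forall j, (j <= n)%N -> {subset Ys j <= Ys n}.
  move=> j jn; have := sub j (n - j)%N; rewrite subnKC //; apply; exact: leqnn.
have rejI : forall r, (r < n)%N -> is_g2 inp r -> r \notin Ys n ->
    1/2 < p r /\ (rej4 inp r (Ys r) \/ rej5 inp r (Ys r)).
  move=> r rn g2 rN; case: (run_step pos run rn).
  - case=> _ [|]; first by rewrite g2.
    by move=> h; exfalso; have := small r (ltnW rn); lra.
  - case=> _ e _; move: rN; have := subn r.+1 rn r; rewrite e inE eqxx.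
    by move=> /(_ isT) ->.
  - case=> W [_ _ _ _ /andP [h _]]; exfalso; have := small r.+1 rn; lra.
  - by case=> _ _ yl hyr hr; split => //; lra.
have feasA : forall i, (i < n)%N -> ~~ is_g2 inp i -> ~~ A i.
  by move=> i hi; apply: contra; apply: fA.
have mle1 := fun b => @mach_le1 R inp A b l1A l2A.
have pair : forall a b, (a < n)%N -> (b < n)%N -> a != b -> A a = A b -> p a + p b <= 1.
  move=> a b an bn ab e.
  have := @machine_ge _ inp pos A (A a) [:: a; b].
  rewrite /= inE ab /= => /(_ isT).
  have -> : load inp [:: a; b] = p a + p b by rewrite /load big_cons big_seq1.
  move=> h; apply: le_trans (h _) (mle1 _).
  by move=> i; rewrite !inE => /orP [/eqP ->|/eqP ->].
have single : forall a, (a < n)%N -> p a <= 1.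
  move=> a an; have := @machine_ge _ inp pos A (A a) [:: a] isT.
  have -> : load inp [:: a] = p a by rewrite /load big_seq1.
  move=> h; apply: le_trans (h _) (mle1 _).
  by move=> i; rewrite !inE => /eqP ->.
have three : forall a b c, (a < n)%N -> (b < n)%N -> (c < n)%N -> a != b -> a != c -> b != c ->
    1/2 < p a -> 1/2 < p b -> 1/2 < p c -> False.
  move=> a b c an bn cn ab ac bc pa pb pc.
  have h1 := pair a b an bn ab; have h2 := pair a c an cn ac; have h3 := pair b c bn cn bc.
  case Aa: (A a); case Ab: (A b); case Ac: (A c);
    first [ have := h1 (etrans Aa (esym Ab)) | have := h2 (etrans Aa (esym Ac))
          | have := h3 (etrans Ab (esym Ac)) ]; lra.
have inN : forall i, i \in Ys n -> (i < n)%N by move=> i /mN /andP [].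
case: (boolP (has (fun r => is_g2 inp r && (r \notin Ys n)) (iota 0 n))) => hr; last first.
  apply: le_trans (@key1 R inp pos (fun i => i \in Ys n) A _) _; last by lra.
  move=> i hi iN; apply: feasA => //; apply/negP => g.
  by move/hasPn: hr => /(_ i); rewrite mem_iota add0n hi g iN => /(_ isT).
case/hasP: hr => r; rewrite mem_iota add0n /= => rn /andP [g2 rN].
have [pr hrej] := rejI r rn g2 rN.
have rYr : {subset Ys r <= Ys n} := subn r (ltnW rn).
have uniqr : forall i, (i < n)%N -> i \notin Ys n -> ~~ A i \/ i = r.
  move=> i hi iN; case g: (is_g2 inp i); last by left; apply: feasA; rewrite ?g.
  right; case: (eqVneq i r) => // ir; exfalso.
  have [pi _] := rejI i hi g iN.
  case: hrej => [[pr4 [p54|[T [uT sT lT bT]]]] | [pr5 [jm jmY bjm]]].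
  - by have := single r rn; lra.
  - have Air : A i != A r.
      by apply/negP => /eqP e; have := pair i r hi rn ir e; lra.
    have Atr : forall t, t \in T -> A t != A r.
      move=> t tT; apply/negP => /eqP e.
      have tN := rYr t (sT t tT).
      have tr : t != r by apply/negP => /eqP et; move: rN; rewrite -et tN.
      by have := pair t r (inN t tN) rn tr e; have := bT t tT; lra.
    have := @machine_ge _ inp pos A (A i) (i :: T).
    rewrite /= uT andbT.
    have iT : i \notin T by apply/negP => /sT /rYr iN'; move: iN; rewrite iN'.
    rewrite iT => /(_ isT) h.
    have : load inp (i :: T) <= 1.
      apply: le_trans (h _) (mle1 _) => t; rewrite inE => /orP [/eqP -> //|tT].
      split; first exact: inN _ (rYr _ (sT t tT)).
      by move: (Atr t tT) Air; case: (A t); case: (A i); case: (A r).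
    by rewrite load_cons; lra.
  - have jmN := rYr jm jmY.
    apply: (three i r jm hi rn (inN jm jmN) ir) => //; try lra.
    + by apply/negP => /eqP e; move: iN; rewrite e jmN.
    + by apply/negP => /eqP e; move: rN; rewrite e jmN.
case Ar: (A r).
- case: hrej => [[pr4 [p54|[T [uT sT lT bT]]]] | [pr5 [jm jmY bjm]]].
  + by have := single r rn; lra.
  + have := @key2 _ inp pos (fun i => i \in Ys n) A r T rn uT.
    have hT : forall s, s \in T -> [/\ (s < n)%N, s \in Ys n & ~~ A s].
      move=> t tT; have tN := rYr t (sT t tT); split => //; first exact: inN _ tN.
      have tr : t != r by apply/negP => /eqP et; move: rN; rewrite -et tN.
      apply/negP => At; have := pair t r (inN t tN) rn tr (etrans At (esym Ar)).
      by have := bT t tT; lra.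
    move=> /(_ hT uniqr) h.
    have := single r rn; lra.
  + have jmN := rYr jm jmY.
    have := @key2 _ inp pos (fun i => i \in Ys n) A r [:: jm] rn isT.
    have hT : forall s, s \in [:: jm] -> [/\ (s < n)%N, s \in Ys n & ~~ A s].
      move=> t; rewrite inE => /eqP ->; split => //; first exact: inN _ jmN.
      have tr : jm != r by apply/negP => /eqP et; move: rN; rewrite -et jmN.
      apply/negP => At; have := pair jm r (inN jm jmN) rn tr (etrans At (esym Ar)).
      lra.
    move=> /(_ hT uniqr) h.
    have : load inp [:: jm] = p jm by rewrite /load big_seq1.
    lra.
- apply: le_trans (@key1 R inp pos (fun i => i \in Ys n) A _) _; last by lra.
  move=> i hi iN; case: (uniqr i hi iN) => // ->; by rewrite Ar.
Qed.

End Make.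



Fixpoint runD (R : realFieldType) (s : seq (job R)) (k : nat) : seq nat :=
  match k with
  | 0 => [::]
  | k'.+1 => stepD (psz s) (is_g2 s) k' (runD s k')
  end.

Lemma stepD_sub (R : realFieldType) (f : nat -> R) g j Y : {subset stepD f g j Y <= j :: Y}.
Proof.
have s1 : {subset Y <= j :: Y} by move=> i iY; rewrite inE iY orbT.
have s2 : {subset j :: Y <= j :: Y} by [].
have s3 : forall P : pred nat, {subset j :: [seq i <- Y | P i] <= j :: Y}.
  by move=> P i; rewrite !inE mem_filter => /orP [->|/andP [_ ->]]; rewrite ?orbT.
rewrite /stepD /=; do ! case: ifP => _; first [exact: s1 | exact: s2 | exact: s3].
Qed.

Lemma runD_lt (R : realFieldType) (s : seq (job R)) j i : i \in runD s j -> (i < j)%N.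
Proof.
elim: j i => [|j IH] i //= /stepD_sub; rewrite inE => /orP [/eqP -> //|/IH].
by move/ltnW.
Qed.

Lemma runD_run (R : realFieldType) (inp : seq (job R)) : positive_input inp ->
  B_run inp (size inp) (runD inp).
Proof.
move=> pos; split => // j jn /=; apply: stepD_spec; last exact: pos.
by move=> i /runD_lt ij; apply: pos; apply: ltn_trans ij jn.
Qed.

Lemma runD_take (R : realFieldType) (inp : seq (job R)) m k : (k <= m)%N ->
  runD (take m inp) k = runD inp k.
Proof.
elim: k => [|k IH] // km /=; rewrite IH ?(ltnW km) //.
apply: stepD_congr.
  move=> i; rewrite inE => /orP [/eqP ->|/runD_lt ik]; rewrite /psz nth_take //.
  by apply: ltn_trans ik km.
by rewrite /is_g2 /pg nth_take.
Qed.

Theorem mainTheorem5 (R : realFieldType) :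
  (forall inp : seq (job R), positive_input inp ->
     (exists Ys, B_run inp (size inp) Ys) /\
     (forall Ys, B_run inp (size inp) Ys ->
        [/\ (forall j, (j < size inp)%N ->
               migration inp j (fun i => i \in Ys j) (fun i => i \in Ys j.+1)
                 <= 3/4 * psz inp j),
            (forall j, (j <= size inp)%N ->
               feasible inp j (fun i => i \in Ys j)) &
            (opt_is inp (size inp) 1 ->
               makespan inp (size inp) (fun i => i \in Ys (size inp)) <= 5/4)]))
  /\
  (forall M : R, 3/4 <= M ->
     exists alg : online_alg R, semi_online_ok M (5/4) alg).
Proof.
split.
  move=> inp pos; split; first by exists (runD inp); exact: runD_run.
  move=> Ys run; split.
  - by move=> j jn; exact: run_mig.
  - move=> j jn i ij iY; have [_ mY _] := run_inv pos run jn.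
    by case/andP: (mY i iY).
  - exact: run_makespan.
move=> M hM; exists (fun s i => i \in runD s (size s)).
move=> inp pos opt; have run := runD_run pos; split; last exact: run_makespan.
move=> j jn.
rewrite !size_takel ?(ltnW jn) // !runD_take ?leqnn //.
split.
- move=> i ij iY; have [_ mY _] := run_inv pos run jn.
  by case/andP: (mY i iY).
- apply: le_trans (run_mig pos run jn) _.
  have := pos j jn; move=> pj.
  by rewrite ler_wpM2r // ltW.
Qed.
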